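(* Let $b\ge1$ and let $A\subseteq\mathbb{N}$ be a nonempty finite set, and let $f\in\mathcal{M}^b$ be the multiset with set-array representation $(A,\emptyset,\ldots,\emptyset)$ (i.e. $f$ is the indicator function of $A$). Then \[d(f)=\sum_{B\text{ divisor of }A}b^{|B|}.\]
   Context: $\mathbb{N}=\{0,1,\ldots\}$. A set $B\subseteq\mathbb{N}$ is a divisor of $A$ if $B+C=A$ for some $C\subseteq\mathbb{N}$, where $S+T=\{s+t:s\in S,t\in T\}$. $\mathcal{M}^b$ is the set of finitely supported functions $f:\mathbb{N}\to\{0,\ldots,b\}$; its set-array representation is $(A_1,\ldots,A_b)$ with $A_i=\{a:f(a)\ge i\}$. Multiset addition is coordinatewise on set arrays, with $S+\emptyset=\emptyset$. $g\in\mathcal{M}^b$ is a divisor of $f$ if $f=g+h$ for some $h\in\mathcal{M}^b$, and $d(f)$ is the number of divisors of $f$. *)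

(* Defs.v *)
From HB Require Import structures.
From mathcomp Require Import all_boot.
From mathcomp Require Import finmap.
Set Implicit Arguments. Unset Strict Implicit. Unset Printing Implicit Defensive.
Local Open Scope fset_scope.

Notation mset := {fsfun nat -> nat with 0%N}.

Definition inMb (b : nat) (f : mset) : Prop := forall a : nat, f a <= b.

(* Sumset S + T = {s + t : s in S, t in T}  (so S + fset0 = fset0). *)
Definition sumset (S T : {fset nat}) : {fset nat} :=
  [fset (s + t)%N | s in S, t in T].

Definition set_divisor (B A : {fset nat}) : Prop :=
  exists C : {fset nat}, sumset B C = A.

(* i-th component A_i = {a : f a >= i} of the set-array representation. *)
Definition setarr (i : nat) (f : mset) : {fset nat} :=
  [fset a in finsupp f | i <= f a].

(* Multiset addition f = g + h, coordinatewise on set arrays (A_1,...,A_b). *)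
Definition madd_eq (b : nat) (f g h : mset) : Prop :=
  forall i, 1 <= i <= b -> setarr i f = sumset (setarr i g) (setarr i h).

Definition ms_divisor (b : nat) (g f : mset) : Prop :=
  inMb b g /\ exists h : mset, inMb b h /\ madd_eq b f g h.

(* Main.v *)
Require Import Defs.
From mathcomp Require Import all_boot.
From mathcomp Require Import finmap.
From Stdlib Require Import ClassicalEpsilon.
Local Open Scope fset_scope.

Definition upd (g : mset) (x v : nat) : mset := [fsfun g with x |-> v].

Lemma updE g x v a : upd g x v a = if a == x then v else g a.
Proof. by rewrite /upd fsfun_withE. Qed.

Fixpoint gensL (b : nat) (l : seq nat) : seq mset :=
  match l with
  | [::] => [:: [fsfun]]
  | x :: l' => [seq upd g x v | g <- gensL b l', v <- iota 1 b]
  end.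

Lemma mset0E (a : nat) : ([fsfun] : mset) a = 0%N.
Proof. by rewrite fsfunE. Qed.

Lemma gensL_size b l : size (gensL b l) = b ^ size l.
Proof. by elim: l => //= x l IH; rewrite size_allpairs IH size_iota expnS mulnC. Qed.

Lemma gensL_mem b l g : uniq l ->
  g \in gensL b l <-> (forall a, g a <= b) /\ (forall a, (g a != 0%N) = (a \in l)).
Proof.
elim: l g => [|x l IH] g /=.
  move=> _; rewrite inE; split.
    by move/eqP->; split=> a; rewrite mset0E.
  move=> [_ H]; apply/eqP/fsfunP => a; rewrite mset0E.
  by apply/eqP; rewrite -[_ == _]negbK H.
move=> /andP[xl ul]; split.
  move/allpairsP => [[g' v] /= [g'in vin ->]].
  have [H1 H2] := (IH g' ul).1 g'in.
  move: vin; rewrite mem_iota => /andP[v1 vb].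
  split=> a; rewrite updE; case: ifP => [/eqP ax|ax].
  - by move: vb; rewrite add1n ltnS.
  - exact: H1.
  - by rewrite ax inE eqxx /= -lt0n.
  - by rewrite inE H2 ax.
move=> [H1 H2]; apply/allpairsP; exists (upd g x 0, g x) => /=; split.
- apply/(IH _ ul); split=> a; rewrite updE; case: ifP => [/eqP ax|ax] //.
  + by rewrite ax (negPf xl).
  + by rewrite H2 inE ax.
- rewrite mem_iota add1n ltnS H1 andbT lt0n H2 inE eqxx //.
- by apply/fsfunP => a; rewrite !updE; case: eqP => [->|].
Qed.

Lemma gensL_uniq b l : uniq l -> uniq (gensL b l).
Proof.
elim: l => [|x l IH] //= /andP[xl ul].
apply: allpairs_uniq; [exact: IH | exact: iota_uniq |].
move=> [g1 v1] [g2 v2] /allpairsP[[g1' v1'] /= [g1in _ [-> ->]]]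
  /allpairsP[[g2' v2'] /= [g2in _ [-> ->]]] /= E.
have ev : v1' = v2' by move: (congr1 (fun f : mset => f x) E); rewrite !updE eqxx.
have z1 : g1' x = 0%N.
  by have [_ H] := (gensL_mem b l g1' ul).1 g1in; apply/eqP; rewrite -[_ == _]negbK H.
have z2 : g2' x = 0%N.
  by have [_ H] := (gensL_mem b l g2' ul).1 g2in; apply/eqP; rewrite -[_ == _]negbK H.
rewrite ev; congr pair; apply/fsfunP => a.
move: (congr1 (fun f : mset => f a) E); rewrite !updE.
by case: eqP => [->|]; rewrite ?z1 ?z2.
Qed.

Lemma sumsetP X Y z :
  reflect (exists s t, [/\ s \in X, t \in Y & z = (s + t)%N]) (z \in sumset X Y).
Proof.
apply: (iffP (imfset2P _ _ _ _ _)).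
  by move=> [s sX [t tY ->]]; exists s, t.
by move=> [s [t [sX tY ->]]]; exists s => //; exists t.
Qed.

Lemma sumset0r X : sumset X fset0 = fset0.
Proof.
apply/fsetP => z; rewrite inE; apply/sumsetP => -[s [t [_]]].
by rewrite inE.
Qed.

Definition ind (C : {fset nat}) : mset := [fsfun x in C => 1%N].

Lemma indE C a : ind C a = (a \in C) :> nat.
Proof. by rewrite /ind fsfunE; case: (a \in C). Qed.

Lemma setarr_ind (k : mset) X : (forall a, k a = (a \in X) :> nat) ->
  setarr 1 k = X /\ forall i, 2 <= i -> setarr i k = fset0.
Proof.
move=> kE; split.
  apply/fsetP => a; rewrite !inE mem_finsupp kE.
  by case: (a \in X).
move=> i i2; apply/fsetP => a; rewrite !inE kE.
have -> : (i <= (a \in X)) = false.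
  by apply/negbTE; rewrite -ltnNge; apply: leq_trans i2; case: (a \in X).
by rewrite andbF.
Qed.

Arguments setarr_ind {k X}.

Lemma setarr1 (g : mset) : setarr 1 g = finsupp g.
Proof.
apply/fsetP => a; rewrite !inE mem_finsupp lt0n.
by case: (g a != 0%N).
Qed.

Lemma msdivP b (A : {fset nat}) (f g : mset) : 1 <= b -> (forall a, f a = (a \in A) :> nat) ->
  ms_divisor b g f <-> inMb b g /\ set_divisor (finsupp g) A.
Proof.
move=> b1 fE; have [f1 f2] := setarr_ind fE; split.
  move=> [gb [h [hb E]]]; split => //.
  exists (setarr 1 h); rewrite -setarr1 -f1; apply/esym/E.
  by rewrite leqnn b1.
move=> [gb [C CE]]; split => //; exists (ind C); split.
  by move=> a; rewrite indE; case: (a \in C).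
have [h1 h2] := setarr_ind (indE C).
move=> i /andP[i1 ib]; case: (ltngtP i 1) => [|i2|->].
- by rewrite ltnNge i1.
- by rewrite f2 // h2 // sumset0r.
- by rewrite f1 h1 setarr1.
Qed.

Lemma div_bound (B A : {fset nat}) : A != fset0 -> set_divisor B A ->
  forall x, x \in B -> x <= \max_(a <- A) a.
Proof.
move=> A0 [C CE] x xB.
have [a aA] : exists a, a \in A.
  by case/fset0Pn: A0 => a aA; exists a.
have /sumsetP [s [c [_ cC _]]] : a \in sumset B C by rewrite CE.
have : (x + c)%N \in A by rewrite -CE; apply/sumsetP; exists x, c.
move=> xcA; apply: leq_trans (leq_addr c x) _.
by apply: (@leq_bigmax_seq _ _ xpredT (fun a : nat => a)) => //.
Qed.

Definition gens b (B : {fset nat}) := gensL b (enum_fset B).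

Lemma gens_supp b B g : g \in gens b B -> finsupp g = B.
Proof.
move=> /(gensL_mem _ _ _ (fset_uniq B)) [_ H].
by apply/fsetP => a; rewrite mem_finsupp H.
Qed.

Lemma gens_memP b B g : g \in gens b B <-> inMb b g /\ finsupp g = B.
Proof.
rewrite /gens (gensL_mem _ _ _ (fset_uniq B)); split.
  move=> [H1 H2]; split => //; apply/fsetP => a; rewrite mem_finsupp H2 //.
move=> [H1 H2]; split => // a; rewrite -H2 mem_finsupp //.
Qed.

Lemma flat_uniq b (s : seq {fset nat}) : uniq s -> uniq (flatten [seq gens b B | B <- s]).
Proof.
elim: s => [|B s IH] //= /andP[Bs us]; rewrite cat_uniq IH // andbT.
rewrite gensL_uniq ?fset_uniq //=; apply/hasPn => g /flatten_mapP [B' B's gin'].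
apply/negP => gin.
move: Bs; rewrite -(gens_supp _ _ _ gin) (gens_supp _ _ _ gin') B's //.
Qed.

Lemma flat_size b (s : seq {fset nat}) :
  size (flatten [seq gens b B | B <- s]) = \sum_(B <- s) b ^ #|`B|.
Proof.
elim: s => [|B s IH]; first by rewrite big_nil.
by rewrite /= size_cat IH big_cons /gens gensL_size.
Qed.

Theorem mainTheorem12 (b : nat) (A : {fset nat}) (f : mset) :
  1 <= b -> A != fset0 -> (forall a : nat, f a = (a \in A) :> nat) ->
  exists (sD : seq {fset nat}) (sM : seq mset),
    [/\ uniq sD, (forall B : {fset nat}, B \in sD <-> set_divisor B A),
        uniq sM, (forall g : mset, g \in sM <-> ms_divisor b g f)
      & size sM = \sum_(B <- sD) b ^ #|`B|].
Proof.
move=> b1 A0 fE.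
pose U : {fset nat} := [fset x in iota 0 (\max_(a <- A) a).+1].
pose dec (B : {fset nat}) : bool :=
  if excluded_middle_informative (set_divisor B A) then true else false.
pose sD := [seq B <- enum_fset (fpowerset U) | dec B].
have sDP : forall B, B \in sD <-> set_divisor B A.
  move=> B; rewrite mem_filter /dec.
  case: excluded_middle_informative => [dB|ndB] /=; last by split.
  split => // _; rewrite fpowersetE; apply/fsubsetP => x xB.
  rewrite in_fset mem_iota /= add0n ltnS.
  exact: (div_bound _ _ A0 dB).
exists sD, (flatten [seq gens b B | B <- sD]); split => //.
- exact/filter_uniq/fset_uniq.
- exact/flat_uniq/filter_uniq/fset_uniq.
- move=> g; rewrite (msdivP _ _ _ _ b1 fE); split.
    move=> /flatten_mapP [B Bs /gens_memP [gb gB]].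
    by split => //; rewrite gB; apply/sDP.
  move=> [gb gd]; apply/flatten_mapP; exists (finsupp g).
    by apply/sDP.
  by apply/gens_memP.
- exact: flat_size.
Qed.
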